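(* For any integer $m$ and $-\pi<\arg\zeta<\pi$, $$S_{-1,0}(\zeta\mathrm{e}^{-m\pi i})=S_{-1,0}(\zeta)+K''_+H^{(1)}_0(\zeta)+K''_-H^{(2)}_0(\zeta),\qquad K''_\pm=-\frac{m\pi^2(m\pm1)}{4}.$$
   Context: $J_0,Y_0$ are Bessel functions of order $0$, $H^{(1)}_0=J_0+iY_0$, $H^{(2)}_0=J_0-iY_0$, $\psi=\Gamma'/\Gamma$. The Lommel function $S_{-1,0}$ is defined by $S_{-1,0}(\zeta)=\frac12\sum_{k\ge0}\frac{(-1)^k(\zeta/2)^{2k}}{(k!)^2}\big\{[\log\frac{\zeta}{2}-\psi(k+1)]^2-\frac12\psi'(k+1)+\frac{\pi^2}{4}\big\}$. Right-hand side functions are on the principal branch $-\pi<\arg\zeta<\pi$; $g(\zeta\mathrm{e}^{-m\pi i})$ is the value of the analytic continuation of the principal branch at the point over $\zeta$ with argument $\arg\zeta-m\pi$. *)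

(* Defs.v *)
From Stdlib Require Import Reals ZArith.
From Coquelicot Require Import Coquelicot.
Open Scope R_scope.

Definition cexp (w : C) : C :=
  (exp (fst w) * cos (snd w), exp (fst w) * sin (snd w)).

Definition CSeries (a : nat -> C) : C :=
  (Series (fun n => fst (a n)), Series (fun n => snd (a n))).

Definition euler_gamma : R :=
  real (Lim_seq (fun n => sum_f_R0 (fun j => / INR (S j)) n - ln (INR (S n)))).

Definition digamma (x : R) : R :=
  - euler_gamma + Series (fun n => / INR (S n) - / (INR n + x)).

Definition trigamma (x : R) : R :=
  Series (fun n => / (INR n + x) ^ 2).

(* Functions on the Riemann surface of the logarithm, in the logarithmic
   coordinate w: the point over zeta with a chosen argument is w = log|zeta| + i arg zeta,
   so zeta = cexp w, (zeta/2)^(2k) = cexp (2k w) / 4^k, and log(zeta/2) = w - ln 2. *)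

Definition coefk (k : nat) : R := (-1) ^ k / (4 ^ k * (INR (fact k)) ^ 2).

Definition termk (w : C) (k : nat) : C :=
  Cmult (RtoC (coefk k)) (cexp (Cmult (RtoC (2 * INR k)) w)).

Definition logzeta2 (w : C) : C := Cminus w (RtoC (ln 2)).

Definition J0_log (w : C) : C := CSeries (termk w).

Definition Y0_log (w : C) : C :=
  Cmult (RtoC (2 / PI))
    (CSeries (fun k => Cmult (termk w k)
                        (Cminus (logzeta2 w) (RtoC (digamma (INR k + 1)))))).

Definition H1_log (w : C) : C := Cplus (J0_log w) (Cmult Ci (Y0_log w)).
Definition H2_log (w : C) : C := Cminus (J0_log w) (Cmult Ci (Y0_log w)).

Definition Sm10_log (w : C) : C :=
  Cmult (RtoC (1 / 2))
    (CSeries (fun k =>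
       Cmult (termk w k)
         (Cplus (Cmult (Cminus (logzeta2 w) (RtoC (digamma (INR k + 1))))
                       (Cminus (logzeta2 w) (RtoC (digamma (INR k + 1)))))
                (RtoC (- trigamma (INR k + 1) / 2 + PI ^ 2 / 4))))).

(* Value of (the analytic continuation of the principal branch of) g at the
   point over zeta = r e^{i theta} with argument theta (r > 0).  For
   -pi < theta < pi this is the principal-branch value g(zeta). *)
Definition at_arg (g : C -> C) (r theta : R) : C := g (ln r, theta).

Definition Kpp (m : Z) : R := - (IZR m * PI ^ 2 * (IZR m + 1)) / 4.
Definition Kpm (m : Z) : R := - (IZR m * PI ^ 2 * (IZR m - 1)) / 4.

(* Main.v *)
Require Import Defs.
From Stdlib Require Import Reals ZArith Lra Lia.
From Coquelicot Require Import Coquelicot.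
Open Scope R_scope.

Lemma series_bounds (a : nat -> R) (lo hi : R) :
  (forall N, lo <= sum_f_R0 a N <= hi) -> lo <= Series a <= hi.
Proof.
  intros H. unfold Series.
  assert (H1 : Rbar_le (Lim_seq (fun _ => lo)) (Lim_seq (sum_n a))).
  { apply Lim_seq_le_loc. exists O. intros n _. rewrite sum_n_Reals. apply H. }
  assert (H2 : Rbar_le (Lim_seq (sum_n a)) (Lim_seq (fun _ => hi))).
  { apply Lim_seq_le_loc. exists O. intros n _. rewrite sum_n_Reals. apply H. }
  rewrite Lim_seq_const in H1, H2.
  destruct (Lim_seq (sum_n a)); simpl in *; try contradiction; lra.
Qed.

Definition NC (z : C) : R := Rabs (fst z) + Rabs (snd z).

Lemma NC_mult z1 z2 : NC (Cmult z1 z2) <= NC z1 * NC z2.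
Proof.
  destruct z1 as [a b], z2 as [c d]; unfold NC, Cmult; simpl.
  pose proof (Rabs_triang (a*c) (-(b*d))). pose proof (Rabs_triang (a*d) (b*c)).
  unfold Rminus. rewrite Rabs_Ropp, !Rabs_mult in *.
  pose proof (Rabs_pos a); pose proof (Rabs_pos b); pose proof (Rabs_pos c); pose proof (Rabs_pos d).
  nra.
Qed.

Lemma NC_plus z1 z2 : NC (Cplus z1 z2) <= NC z1 + NC z2.
Proof.
  destruct z1 as [a b], z2 as [c d]; unfold NC, Cplus; simpl.
  pose proof (Rabs_triang a c). pose proof (Rabs_triang b d). lra.
Qed.

Lemma NC_pos z : 0 <= NC z.
Proof. unfold NC. pose proof (Rabs_pos (fst z)); pose proof (Rabs_pos (snd z)); lra. Qed.

Definition cex (a : nat -> C) :=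
  ex_series (fun n => fst (a n)) /\ ex_series (fun n => snd (a n)).

Lemma ex_exp_ser (K M : R) : ex_series (fun n => K * (M ^ n / INR (fact n))).
Proof.
  apply (ex_series_scal_l K (fun n => M ^ n / INR (fact n))).
  exists (exp M). eapply is_series_ext; [| apply (is_exp_Reals M)].
  intros n. simpl. rewrite pow_n_pow. unfold scal; simpl. unfold mult; simpl.
  unfold Rdiv. reflexivity.
Qed.

Lemma cex_bound (a : nat -> C) (K M : R) :
  (forall n, NC (a n) <= K * (M ^ n / INR (fact n))) -> cex a.
Proof.
  intros H. split; apply (ex_series_le (K:=R_AbsRing) (V:=R_CompleteNormedModule) _ (fun n => K * (M ^ n / INR (fact n)))); try apply (ex_exp_ser K M); intros n;
  specialize (H n); unfold NC in H; unfold norm; simpl; unfold abs; simpl;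
  pose proof (Rabs_pos (fst (a n))); pose proof (Rabs_pos (snd (a n))); lra.
Qed.

Lemma exsR (c : R) (a : nat -> R) : ex_series a -> ex_series (fun n => c * a n).
Proof. intros H. apply (ex_series_scal_l (K:=R_AbsRing) (V:=R_NormedModule) c a H). Qed.
Lemma exsRp (a b : nat -> R) : ex_series a -> ex_series b -> ex_series (fun n => a n + b n).
Proof. intros H1 H2. apply (ex_series_plus (K:=R_AbsRing) (V:=R_NormedModule) a b H1 H2). Qed.
Lemma exsRo (a : nat -> R) : ex_series a -> ex_series (fun n => - a n).
Proof. intros H1. apply (ex_series_opp (K:=R_AbsRing) (V:=R_NormedModule) a H1). Qed.

Lemma CSeries_ext (a b : nat -> C) : (forall n, a n = b n) -> CSeries a = CSeries b.
Proof. intros H. unfold CSeries. f_equal; apply Series_ext; intros n; rewrite H; auto. Qed.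

Lemma CSeries_plus (a b : nat -> C) : cex a -> cex b ->
  CSeries (fun n => Cplus (a n) (b n)) = Cplus (CSeries a) (CSeries b).
Proof.
  intros [Ha1 Ha2] [Hb1 Hb2]. unfold CSeries, Cplus; simpl.
  f_equal; apply (Series_plus _ _ Ha1 Hb1) || apply (Series_plus _ _ Ha2 Hb2).
Qed.

Lemma CSeries_scal (c : C) (a : nat -> C) : cex a ->
  CSeries (fun n => Cmult c (a n)) = Cmult c (CSeries a).
Proof.
  intros [H1 H2]. unfold CSeries, Cmult; simpl. destruct c as [c1 c2]; simpl.
  rewrite (Series_minus (fun n => c1 * fst (a n)) (fun n => c2 * snd (a n))).
  rewrite (Series_plus (fun n => c1 * snd (a n)) (fun n => c2 * fst (a n))).
  rewrite !Series_scal_l. reflexivity.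
  all: apply exsR; assumption.
Qed.

Lemma cex_plus a b : cex a -> cex b -> cex (fun n => Cplus (a n) (b n)).
Proof.
  intros [H1 H2] [H3 H4]; split; simpl.
  apply (exsRp _ _ H1 H3). apply (exsRp _ _ H2 H4).
Qed.

Lemma cex_scal c a : cex a -> cex (fun n => Cmult c (a n)).
Proof.
  intros [H1 H2]; destruct c as [c1 c2]; split; simpl.
  - apply (exsRp (fun n => c1 * fst (a n)) (fun n => - (c2 * snd (a n)))).
    apply exsR, H1. apply (exsRo (fun n => c2 * snd (a n))). apply exsR, H2.
  - apply (exsRp (fun n => c1 * snd (a n)) (fun n => c2 * fst (a n))).
    apply exsR, H2. apply exsR, H1.
Qed.

Lemma inv_sq_sum N : sum_f_R0 (fun n => / (INR n + 1)^2) N <= 2 - / (INR N + 1).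
Proof.
  induction N as [|N IH].
  - simpl. replace ((0 + 1) * ((0 + 1) * 1)) with 1 by ring. replace (0+1) with 1 by ring. rewrite Rinv_1. lra.
  - rewrite tech5; cbv beta. rewrite S_INR. pose proof (pos_INR N) as HN.
    set (x := INR N + 1) in *. assert (Hx : 1 <= x) by (unfold x; lra). clearbody x.
    assert (E : / (x + 1) ^ 2 + / (x + 1) - / x = - / (x * (x+1)^2)) by (field; repeat split; lra).
    assert (0 < / (x * (x+1)^2)) by (apply Rinv_0_lt_compat; nra).
    lra.
Qed.

Lemma digamma_ser_bound k :
  0 <= Series (fun n => / INR (S n) - / (INR n + (INR k + 1))) <= 2 * INR k.
Proof.
  apply series_bounds; intros N. split.
  - rewrite <- (Rmult_0_l (INR (S N))), <- sum_cte. apply sum_Rle. intros n _.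
    rewrite S_INR. pose proof (pos_INR n); pose proof (pos_INR k).
    assert (/ (INR n + (INR k + 1)) <= / (INR n + 1)) by (apply Rinv_le_contravar; lra). lra.
  - apply Rle_trans with (sum_f_R0 (fun n => / (INR n + 1)^2 * INR k) N).
    + apply sum_Rle. intros n _. rewrite S_INR. pose proof (pos_INR n); pose proof (pos_INR k).
      replace (INR n + (INR k + 1)) with (INR n + 1 + INR k) by ring.
      set (x := INR n + 1) in *. assert (Hx : 1 <= x) by (unfold x; lra). clearbody x.
      set (y := INR k) in *. clearbody y.
      assert (E : / x - / (x + y) = y * / (x * (x + y))) by (field; repeat split; lra).
      rewrite E.
      rewrite Rmult_comm. apply Rmult_le_compat_r; [lra|].
      replace (x^2) with (x*x) by ring. apply Rinv_le_contravar; nra.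
    + rewrite <- scal_sum. pose proof (inv_sq_sum N). pose proof (pos_INR k).
      assert (0 < / (INR N + 1)) by (apply Rinv_0_lt_compat; pose proof (pos_INR N); lra).
      nra.
Qed.

Lemma digamma_bound k : Rabs (digamma (INR k + 1)) <= Rabs euler_gamma + 2 * INR k.
Proof.
  unfold digamma. pose proof (digamma_ser_bound k).
  eapply Rle_trans; [apply Rabs_triang|]. rewrite Rabs_Ropp.
  rewrite (Rabs_right (Series _)) by lra. lra.
Qed.

Lemma trigamma_bound k : 0 <= trigamma (INR k + 1) <= 2.
Proof.
  unfold trigamma. apply series_bounds; intros N. pose proof (pos_INR k). split.
  - rewrite <- (Rmult_0_l (INR (S N))), <- sum_cte. apply sum_Rle. intros n _.
    pose proof (pos_INR n). left. apply Rinv_0_lt_compat. apply pow_lt. lra.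
  - apply Rle_trans with (sum_f_R0 (fun n => / (INR n + 1)^2) N).
    + apply sum_Rle. intros n _. pose proof (pos_INR n). apply Rinv_le_contravar.
      apply pow_lt; lra. apply pow_incr; lra.
    + pose proof (inv_sq_sum N).
      assert (0 < / (INR N + 1)) by (apply Rinv_0_lt_compat; pose proof (pos_INR N); lra).
      lra.
Qed.

Lemma exp_nat k x : exp (INR k * x) = exp x ^ k.
Proof.
  induction k as [|k IH]. simpl. rewrite Rmult_0_l, exp_0. auto.
  rewrite S_INR, Rmult_plus_distr_r, Rmult_1_l, exp_plus, IH. simpl. ring.
Qed.

Lemma fact_ge1 k : 1 <= INR (fact k).
Proof. pose proof (lt_O_fact k). apply (le_INR 1). lia. Qed.

Lemma pow_ge1 x k : 1 <= x -> 1 <= x ^ k.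
Proof. intros H. induction k; simpl; nra. Qed.

Lemma Rabs_coefk k : Rabs (coefk k) = / (4 ^ k * INR (fact k) ^ 2).
Proof.
  unfold coefk, Rdiv. rewrite Rabs_mult, pow_1_abs, Rmult_1_l.
  pose proof (fact_ge1 k). pose proof (pow_ge1 4 k).
  rewrite Rabs_inv, Rabs_pos_eq. auto. apply Rmult_le_pos; [lra| apply pow_le; lra].
Qed.

Definition Pk (M : R) (k : nat) := M ^ k / (4 ^ k * INR (fact k) ^ 2).

Lemma T_bound a th k : NC (termk (a, th) k) <= 2 * Pk (exp (2 * a)) k.
Proof.
  unfold termk, NC, cexp, Cmult, RtoC, Pk; simpl.
  replace (2 * INR k * a - 0 * th) with (INR k * (2 * a)) by ring.
  rewrite exp_nat.
  set (c := coefk k). set (e := exp (2*a) ^ k).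
  set (u := cos (2 * INR k * th + 0 * a)). set (v := sin (2 * INR k * th + 0 * a)).
  assert (He : 0 <= e) by (unfold e; apply pow_le; left; apply exp_pos).
  assert (Hu : Rabs u <= 1) by apply Rabs_le, COS_bound.
  assert (Hv : Rabs v <= 1) by apply Rabs_le, SIN_bound.
  replace (c * (e * u) - 0 * (e * v)) with (c * e * u) by ring.
  replace (c * (e * v) + 0 * (e * u)) with (c * e * v) by ring.
  rewrite !Rabs_mult. unfold c. rewrite Rabs_coefk, (Rabs_pos_eq e He).
  assert (0 <= / (4 ^ k * INR (fact k) ^ 2)).
  { left; apply Rinv_0_lt_compat. pose proof (fact_ge1 k); pose proof (pow_ge1 4 k); nra. }
  unfold Rdiv. pose proof (Rabs_pos u); pose proof (Rabs_pos v).
  assert (0 <= / (4 ^ k * INR (fact k) ^ 2) * e) by (apply Rmult_le_pos; auto).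
  replace (INR (fact k) * (INR (fact k) * 1)) with (INR (fact k) ^ 2) by ring.
  set (D := / (4 ^ k * INR (fact k) ^ 2)) in *. nra.
Qed.

Lemma cex16 (a : nat -> C) (K M : R) : 0 <= K -> 0 <= M ->
  (forall n, NC (a n) <= K * 16 ^ n * Pk M n) -> cex a.
Proof.
  intros HK HM H. apply (cex_bound a K (4 * M)). intros n.
  eapply Rle_trans; [apply H|]. unfold Pk.
  replace (16 ^ n) with (4 ^ n * 4 ^ n) by (rewrite <- Rpow_mult_distr; f_equal; ring).
  rewrite Rpow_mult_distr.
  pose proof (fact_ge1 n); pose proof (pow_ge1 4 n). pose proof (pow_le M n HM).
  set (f := INR (fact n)) in *. set (q := 4 ^ n) in *. set (p := M ^ n) in *.
  replace (K * (q * q) * (p / (q * f ^ 2))) with (K * (q * p) / f * / f) by (field; lra).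
  replace (K * (q * p / f)) with (K * (q * p) / f * 1) by (field; lra).
  apply Rmult_le_compat_l.
  - unfold Rdiv. apply Rmult_le_pos. apply Rmult_le_pos; nra. left; apply Rinv_0_lt_compat; lra.
  - rewrite <- Rinv_1. apply Rinv_le_contravar; lra.
Qed.

Lemma cos_Zper x (z : Z) : cos (x + 2 * IZR z * PI) = cos x.
Proof.
  destruct (Z_le_gt_dec 0 z) as [Hz|Hz].
  - rewrite <- (Z2Nat.id z Hz), <- INR_IZR_INZ. apply cos_period.
  - replace z with (- Z.of_nat (Z.to_nat (- z)))%Z by lia.
    rewrite opp_IZR, <- INR_IZR_INZ. set (n := Z.to_nat (-z)).
    rewrite <- (cos_period (x + 2 * - INR n * PI) n). f_equal. ring.
Qed.

Lemma sin_Zper x (z : Z) : sin (x + 2 * IZR z * PI) = sin x.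
Proof.
  destruct (Z_le_gt_dec 0 z) as [Hz|Hz].
  - rewrite <- (Z2Nat.id z Hz), <- INR_IZR_INZ. apply sin_period.
  - replace z with (- Z.of_nat (Z.to_nat (- z)))%Z by lia.
    rewrite opp_IZR, <- INR_IZR_INZ. set (n := Z.to_nat (-z)).
    rewrite <- (sin_period (x + 2 * - INR n * PI) n). f_equal. ring.
Qed.

Lemma termk_shift a th (m : Z) k : termk (a, th - IZR m * PI) k = termk (a, th) k.
Proof.
  unfold termk, cexp, Cmult, RtoC; simpl.
  replace (2 * INR k * (th - IZR m * PI) + 0 * a)
    with ((2 * INR k * th + 0 * a) + 2 * IZR (- (Z.of_nat k * m)) * PI)
    by (rewrite opp_IZR, mult_IZR, <- INR_IZR_INZ; ring).
  rewrite cos_Zper, sin_Zper.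
  replace (2 * INR k * a - 0 * (th - IZR m * PI)) with (2 * INR k * a - 0 * th) by ring.
  reflexivity.
Qed.

Lemma alg (t : C) (a th d c M : R) :
  let L := Cminus (Cminus (a, th) (RtoC (ln 2))) (RtoC d) in
  Cmult t (Cplus (Cmult (Cminus (Cminus (a, th - M) (RtoC (ln 2))) (RtoC d))
                        (Cminus (Cminus (a, th - M) (RtoC (ln 2))) (RtoC d))) (RtoC c))
  = Cplus (Cplus (Cmult t (Cplus (Cmult L L) (RtoC c))) (Cmult (0, -2 * M) (Cmult t L)))
          (Cmult (RtoC (- M ^ 2)) t).
Proof.
  intros L; unfold L. destruct t as [t1 t2].
  unfold Cmult, Cplus, Cminus, Copp, RtoC; simpl. apply injective_projections; simpl; ring.
Qed.

Lemma four_pow k : 1 + 2 * INR k <= 4 ^ k.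
Proof.
  induction k. change (INR 0) with 0; change (4 ^ 0) with 1; lra. rewrite S_INR. change (4 ^ S k) with (4 * 4 ^ k). pose proof (pow_ge1 4 k). lra.
Qed.

Lemma L_bound a th k :
  NC (Cminus (logzeta2 (a, th)) (RtoC (digamma (INR k + 1))))
  <= (Rabs (a - ln 2) + Rabs euler_gamma + Rabs th + 1) * 4 ^ k.
Proof.
  unfold NC, logzeta2, Cminus, Cplus, Copp, RtoC; simpl.
  pose proof (digamma_bound k). pose proof (four_pow k).
  set (d := digamma (INR k + 1)) in *.
  replace (a + - ln 2 + - d) with ((a - ln 2) + - d) by ring.
  replace (th + - 0 + - 0) with th by ring.
  pose proof (Rabs_triang (a - ln 2) (- d)). rewrite Rabs_Ropp in H1.
  pose proof (Rabs_pos (a - ln 2)); pose proof (Rabs_pos euler_gamma); pose proof (Rabs_pos th).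
  pose proof (pos_INR k).
  assert (HD : 1 <= Rabs (a - ln 2) + Rabs euler_gamma + Rabs th + 1) by lra.
  remember (Rabs (a - ln 2) + Rabs euler_gamma + Rabs th + 1) as D eqn:HDe.
  assert (0 <= (D - 1) * (4 ^ k - 1)) by (apply Rmult_le_pos; lra).
  assert (D + 2 * INR k <= D * 4 ^ k) by nra. lra.
Qed.

Theorem lemma3p7 (m : Z) (r theta : R) (hr : 0 < r) (htheta : - PI < theta < PI) :
  at_arg Sm10_log r (theta - IZR m * PI) =
  Cplus (Cplus (at_arg Sm10_log r theta)
               (Cmult (RtoC (Kpp m)) (at_arg H1_log r theta)))
        (Cmult (RtoC (Kpm m)) (at_arg H2_log r theta)).
Proof.
  unfold at_arg. generalize (ln r) as a. intros a.
  set (T := fun k => termk (a, theta) k).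
  set (L := fun k => Cminus (logzeta2 (a, theta)) (RtoC (digamma (INR k + 1)))).
  set (c := fun k => - trigamma (INR k + 1) / 2 + PI ^ 2 / 4).
  set (M := IZR m * PI).
  set (D := Rabs (a - ln 2) + Rabs euler_gamma + Rabs theta + 1).
  assert (HD : 0 <= D) by (unfold D; pose proof (Rabs_pos (a - ln 2));
     pose proof (Rabs_pos euler_gamma); pose proof (Rabs_pos theta); lra).
  assert (HE : 0 <= exp (2 * a)) by (left; apply exp_pos).
  assert (HPk : forall k, 0 <= Pk (exp (2 * a)) k).
  { intros k. unfold Pk, Rdiv. apply Rmult_le_pos. apply pow_le; auto.
    left; apply Rinv_0_lt_compat. pose proof (fact_ge1 k); pose proof (pow_ge1 4 k); nra. }
  assert (H16 : forall k, 4 ^ k <= 16 ^ k /\ 1 <= 4 ^ k).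
  { intros k. split. apply pow_incr; lra. apply pow_ge1; lra. }
  assert (HLb : forall k, NC (L k) <= D * 4 ^ k) by (intros k; apply L_bound).
  assert (HTb : forall k, NC (T k) <= 2 * Pk (exp (2 * a)) k) by (intros k; apply T_bound).
  assert (HT : cex T).
  { apply (cex16 T 2 (exp (2 * a))); try lra; auto. intros k.
    specialize (HTb k); specialize (HPk k); destruct (H16 k).
    assert (1 <= 16 ^ k) by lra. nra. }
  assert (HTL : cex (fun k => Cmult (T k) (L k))).
  { apply (cex16 _ (2 * D) (exp (2 * a))); try lra; auto. intros k.
    eapply Rle_trans; [apply NC_mult|].
    specialize (HTb k); specialize (HPk k); specialize (HLb k); destruct (H16 k).
    pose proof (NC_pos (T k)); pose proof (NC_pos (L k)).
    apply Rle_trans with (2 * Pk (exp (2 * a)) k * (D * 4 ^ k)).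
    apply Rmult_le_compat; auto. 
    assert (0 <= 2 * Pk (exp (2 * a)) k * D) by (apply Rmult_le_pos; lra).
    replace (2 * D * 16 ^ k * Pk (exp (2 * a)) k) with (2 * Pk (exp (2 * a)) k * D * 16 ^ k) by ring.
    replace (2 * Pk (exp (2 * a)) k * (D * 4 ^ k)) with (2 * Pk (exp (2 * a)) k * D * 4 ^ k) by ring.
    apply Rmult_le_compat_l; auto. }
  assert (Hcb : forall k, NC (RtoC (c k)) <= 1 + PI ^ 2 / 4).
  { intros k. unfold NC, RtoC, c; cbn [fst snd]. rewrite Rabs_R0. pose proof (trigamma_bound k).
    pose proof PI_RGT_0. assert (0 <= PI ^ 2) by (apply pow_le; lra).
    apply Rle_trans with (Rabs (- trigamma (INR k + 1) / 2) + Rabs (PI ^ 2 / 4) + 0).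
    rewrite !Rplus_0_r. apply Rabs_triang.
    assert (Rabs (- trigamma (INR k + 1) / 2) <= 1) by (apply Rabs_le; lra).
    rewrite (Rabs_pos_eq (PI ^ 2 / 4)) by lra. lra. }
  assert (HTQ : cex (fun k => Cmult (T k) (Cplus (Cmult (L k) (L k)) (RtoC (c k))))).
  { apply (cex16 _ (2 * (D * D + (1 + PI ^ 2 / 4))) (exp (2 * a))); auto.
    pose proof PI_RGT_0. assert (0 <= PI ^ 2) by (apply pow_le; lra). nra.
    intros k.
    eapply Rle_trans; [apply NC_mult|].
    specialize (HTb k); specialize (HPk k); specialize (HLb k); specialize (Hcb k); destruct (H16 k).
    pose proof (NC_pos (T k)); pose proof (NC_pos (L k)).
    pose proof (NC_pos (RtoC (c k))).
    assert (HQ : NC (Cplus (Cmult (L k) (L k)) (RtoC (c k))) <= (D * D + (1 + PI ^ 2 / 4)) * 16 ^ k).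
    { eapply Rle_trans; [apply NC_plus|]. 
      pose proof (NC_mult (L k) (L k)).
      assert (NC (L k) * NC (L k) <= (D * 4 ^ k) * (D * 4 ^ k)) by (apply Rmult_le_compat; auto).
      replace (16 ^ k) with (4 ^ k * 4 ^ k) by (rewrite <- Rpow_mult_distr; f_equal; ring).
      assert (1 <= 4 ^ k * 4 ^ k) by nra.
      assert (0 <= 1 + PI ^ 2 / 4) by (pose proof (NC_pos (RtoC (c k))); lra).
      nra. }
    pose proof (NC_pos (Cplus (Cmult (L k) (L k)) (RtoC (c k)))).
    apply Rle_trans with (2 * Pk (exp (2 * a)) k * ((D * D + (1 + PI ^ 2 / 4)) * 16 ^ k)).
    apply Rmult_le_compat; auto.
    right; ring. }
  unfold Sm10_log.
  rewrite (CSeries_ext _ (fun k => Cplus (Cplus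
             (Cmult (T k) (Cplus (Cmult (L k) (L k)) (RtoC (c k))))
             (Cmult (0, -2 * M) (Cmult (T k) (L k))))
             (Cmult (RtoC (- M ^ 2)) (T k)))).
  2: { intros k. unfold M. rewrite termk_shift. unfold T, L, c, logzeta2. apply alg. }
  rewrite CSeries_plus, CSeries_plus, CSeries_scal, CSeries_scal; auto.
  all: try (repeat first [apply cex_plus | apply cex_scal | assumption]; fail).
  unfold H1_log, H2_log, J0_log, Y0_log.
  change (CSeries (fun k => Cmult (termk (a, theta) k)
     (Cminus (logzeta2 (a, theta)) (RtoC (digamma (INR k + 1))))))
    with (CSeries (fun k => Cmult (T k) (L k))).
  change (CSeries (termk (a, theta))) with (CSeries T).
  change (CSeries (fun k => Cmult (termk (a, theta) k) (Cplus (Cmult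
      (Cminus (logzeta2 (a, theta)) (RtoC (digamma (INR k + 1))))
      (Cminus (logzeta2 (a, theta)) (RtoC (digamma (INR k + 1)))))
      (RtoC (- trigamma (INR k + 1) / 2 + PI ^ 2 / 4)))))
    with (CSeries (fun k => Cmult (T k) (Cplus (Cmult (L k) (L k)) (RtoC (c k))))).
  generalize (CSeries (fun k => Cmult (T k) (L k))) as Y.
  generalize (CSeries T) as Z.
  generalize (CSeries (fun k => Cmult (T k) (Cplus (Cmult (L k) (L k)) (RtoC (c k))))) as X.
  intros [x1 x2] [z1 z2] [y1 y2].
  unfold Kpp, Kpm, M. pose proof PI_RGT_0.
  unfold Cmult, Cplus, Cminus, Copp, RtoC, Ci; simpl.
  apply injective_projections; simpl; field; lra.
Qed.
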